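(* Let $E$ be a finite extension of $\mathbb{Q}_p$ with ring of integers $\mathcal{O}$ and maximal ideal $\lambda$, let $n \ge 1$, let $M = (\mathcal{O}/\lambda^n)^2$ and let $A \in \mathrm{End}_{\mathcal{O}}(M)$ with characteristic polynomial $f_A(X)$. Suppose there exist $\alpha, \beta \in \mathcal{O}/\lambda^n$ such that $f_A(X) = (X-\alpha)(X-\beta)$ and $\alpha - \beta$ is divisible exactly by $\lambda^m$ for some integer $0 \le m \le n-1$. Then there exist $e_1, e_2 \in M$ with $\lambda^{n-m-1}e_1 \neq 0$ and $\lambda^{n-m-1}e_2 \neq 0$ such that $Ae_1 = \alpha e_1$ and $Ae_2 = \beta e_2$. *)

(* Defs.v *)
From HB Require Import structures.
From mathcomp Require Import all_boot all_order all_algebra.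
Set Implicit Arguments. Unset Strict Implicit. Unset Printing Implicit Defensive.
Import Order.TTheory GRing.Theory Num.Theory.
Local Open Scope ring_scope.

Definition dvdO (R : comNzRingType) (a b : R) : Prop := exists c : R, b = c * a.

(* pi is a uniformizer of the integral domain O, i.e. O is a discrete
   valuation ring with maximal ideal lambda = (pi): pi is a nonzero non-unit
   and every nonzero element is a unit times a power of pi. *)
Definition uniformizer (O : idomainType) (pi : O) : Prop :=
  pi != 0 /\ pi \isn't a GRing.unit /\
  forall x : O, x != 0 -> exists (k : nat) (u : O), u \is a GRing.unit /\ x = u * pi ^+ k.

(* O is the ring of integers of a finite extension E of Q_p, with maximal
   ideal lambda = (pi): O is a complete discrete valuation ring of
   characteristic 0 whose residue field O/lambda is finite of characteristic p. *)
Definition padic_integer_ring (p : nat) (O : idomainType) (pi : O) : Prop :=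
  [/\ prime p /\ uniformizer pi,
      (forall k : nat, (0 < k)%N -> k%:R != 0 :> O),
      (* residue characteristic p *)
      dvdO pi (p%:R : O),
      (* finite residue field *)
      (exists s : seq O, forall x : O, exists2 r, r \in s & dvdO pi (x - r)) &
      (forall x : nat -> O, (forall k, dvdO (pi ^+ k) (x k.+1 - x k)) ->
         exists y : O, forall k, dvdO (pi ^+ k) (y - x k))].

(* congruence modulo lambda^n = (pi^n) of elements, polynomials, matrices:
   these model equality in O/lambda^n, (O/lambda^n)[X], and M = (O/lambda^n)^2 *)
Definition congO (O : idomainType) (pi : O) (n : nat) (a b : O) : Prop :=
  dvdO (pi ^+ n) (a - b).
Definition cong_poly (O : idomainType) (pi : O) (n : nat) (f g : {poly O}) : Prop :=
  forall i : nat, congO pi n f`_i g`_i.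
Definition cong_mx (O : idomainType) (pi : O) (n r c : nat) (u v : 'M[O]_(r, c)) : Prop :=
  forall i j, congO pi n (u i j) (v i j).

(* Main.v *)
Require Import Defs.
From HB Require Import structures.
From mathcomp Require Import all_boot all_order all_algebra.
From mathcomp Require Import ring.
Import Order.TTheory GRing.Theory Num.Theory.
Local Open Scope ring_scope.
From Stdlib Require Import Classical. From mathcomp Require Import zify.

Lemma det2 (R : comNzRingType) (A : 'M[R]_2) : \det A = A 0 0 * A 1 1 - A 0 1 * A 1 0.
Proof.
rewrite (expand_det_row _ 0) !big_ord_recl big_ord0 /cofactor !det_mx11 !mxE /=.
have -> : lift (0 : 'I_2) 0 = 1 by apply/val_inj.

have -> : lift (1 : 'I_2) 0 = 0 by apply/val_inj.
have -> : (ord0 : 'I_2) = 0 by apply/val_inj.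
rewrite /= expr0 expr1; ring.
Qed.
Lemma tr2 (R : comNzRingType) (A : 'M[R]_2) : \tr A = A 0 0 + A 1 1.
Proof. rewrite /mxtrace !big_ord_recl big_ord0 /=.
have -> : lift (ord0 : 'I_2) ord0 = 1 by apply/val_inj.
have -> : (ord0 : 'I_2) = 0 by apply/val_inj.
by rewrite addr0. Qed.
Lemma ord2_ind (P : 'I_2 -> Prop) : P 0 -> P 1 -> forall i, P i.
Proof.
move=> h0 h1 [[|[|//]] Hi].
  by have -> : Ordinal Hi = 0 by apply/val_inj.
by have -> : Ordinal Hi = 1 by apply/val_inj.
Qed.
Lemma ord1_ind (P : 'I_1 -> Prop) : P 0 -> forall i, P i.
Proof. by move=> h0 i; rewrite (ord1 i). Qed.
Lemma quad_coef (R : comNzRingType) (a b : R) :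
  (('X - a%:P) * ('X - b%:P))`_0 = a * b /\ (('X - a%:P) * ('X - b%:P))`_1 = - (a + b).
Proof.
split.
  by rewrite coef0M !coefB !coefX !coefC /=; ring.
rewrite coefM !big_ord_recl big_ord0 /= !coefB !coefX !coefC /=; ring.
Qed.
Lemma eig (O : idomainType) (pi : O) (n m : nat) (A : 'M[O]_2) (al be k1 k2 : O) :
  pi != 0 -> (m < n)%N ->
  A 0 0 + A 1 1 = al + be + k1 * pi ^+ n ->
  A 0 0 * A 1 1 - A 0 1 * A 1 0 = al * be + k2 * pi ^+ n ->
  ~ dvdO (pi ^+ m.+1) (al - be) ->
  exists e : 'cV[O]_2, ~ cong_mx pi n (pi ^+ (n - m - 1) *: e) 0 /\
     cong_mx pi n (A *m e) (al *: e).
Proof.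
move=> pi0 mn htr hdet hnd.
have E0 : (ord0 : 'I_2) = 0 by apply/val_inj.
have E1 : lift ord0 ord0 = 1 :> 'I_2 by apply/val_inj.
have key : A 0 0 * A 1 1 - A 0 1 * A 1 0 - al * (A 0 0 + A 1 1) + al ^+ 2 = (k2 - al * k1) * pi ^+ n.
  by rewrite hdet htr; ring.
have hpn : pi ^+ n = pi ^+ (n - m - 1) * pi ^+ m.+1.
  by rewrite -exprD; congr (_ ^+ _); lia.
have hq : pi ^+ (n - m - 1) != 0 by rewrite expf_neq0.
have nondiv : forall x : O, ~ dvdO (pi ^+ m.+1) x ->
    ~ dvdO (pi ^+ n) (pi ^+ (n - m - 1) * x - 0).
  move=> x hx [c hc]; apply: hx; exists c.
  apply: (mulfI hq); rewrite subr0 in hc; rewrite hc hpn; ring.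
case: (classic (dvdO (pi ^+ m.+1) (A 0 0 - al))) => ha.
  case: (classic (dvdO (pi ^+ m.+1) (A 1 1 - al))) => hd.
    exfalso; apply: hnd; case: ha => x hx; case: hd => y hy.
    exists (k1 * pi ^+ (n - m - 1) - x - y).
    have -> : al - be = k1 * pi ^+ n - (A 0 0 - al) - (A 1 1 - al).
      have : A 0 0 + A 1 1 - (al + be + k1 * pi ^+ n) = 0 by rewrite htr subrr.
      move=> h; apply/eqP; rewrite -subr_eq0; apply/eqP; rewrite -h; ring.
    rewrite hx hy hpn; ring.
  exists (\col_i (if i == 0 then A 1 1 - al else - A 1 0)); split.
    move=> h; apply: (nondiv _ hd); have := h 0 0; rewrite !mxE /=.
    by [].
  apply: ord2_ind; apply: ord1_ind; rewrite /congO !mxE !big_ord_recl big_ord0 !mxE /= ?E0 ?E1.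
    exists (k2 - al * k1).
    transitivity (A 0 0 * A 1 1 - A 0 1 * A 1 0 - al * (A 0 0 + A 1 1) + al ^+ 2); first ring.
    by rewrite key.
  exists 0; ring.
exists (\col_i (if i == 0 then A 0 1 else - (A 0 0 - al))); split.
  move=> h; apply: (nondiv (- (A 0 0 - al))).
    by move=> [c hc]; apply: ha; exists (- c); rewrite mulNr -hc opprK.
  by have := h 1 0; rewrite !mxE /=.
apply: ord2_ind; apply: ord1_ind; rewrite /congO !mxE !big_ord_recl big_ord0 !mxE /= ?E0 ?E1.
  exists 0; ring.
exists (- (k2 - al * k1)); rewrite mulNr -key; ring.
Qed.

Theorem lemma4p1 (p : nat) (O : idomainType) (pi : O)
  (hO : padic_integer_ring p pi) (n : nat) (hn : (1 <= n)%N)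
  (A : 'M[O]_2) (alpha beta : O) (m : nat) (hm : (m <= n - 1)%N)
  (hf : cong_poly pi n (char_poly A) (('X - alpha%:P) * ('X - beta%:P)))
  (hdiv : dvdO (pi ^+ m) (alpha - beta))
  (hexact : ~ dvdO (pi ^+ m.+1) (alpha - beta)) :
  exists e1 e2 : 'cV[O]_2,
    [/\ ~ cong_mx pi n (pi ^+ (n - m - 1) *: e1) 0,
        ~ cong_mx pi n (pi ^+ (n - m - 1) *: e2) 0,
        cong_mx pi n (A *m e1) (alpha *: e1) &
        cong_mx pi n (A *m e2) (beta *: e2)].
Proof.
case: hO => [[_ [pi0 _]] _ _ _ _].
have mn : (m < n)%N by lia.
have [q0 q1] := @quad_coef O alpha beta.
have [c0 h0] := hf 0%N; have [c1 h1] := hf 1%N.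
rewrite char_poly_det q0 det2 expr2 mulrNN mul1r in h0.
have h1' := h1; rewrite (char_poly_trace A (isT : (0 < 2)%N)) /= q1 tr2 in h1'.
have htr : A 0 0 + A 1 1 = alpha + beta + (- c1) * pi ^+ n.
  apply/eqP; rewrite -subr_eq0 -[X in X == _]opprK.
  have -> : - (A 0 0 + A 1 1 - (alpha + beta + - c1 * pi ^+ n)) = - (A 0 0 + A 1 1) - - (alpha + beta) - c1 * pi ^+ n by ring.
  by rewrite h1' subrr oppr0.
have hdet : A 0 0 * A 1 1 - A 0 1 * A 1 0 = alpha * beta + c0 * pi ^+ n.
  by rewrite -h0; ring.
have [e1 [ne1 he1]] := @eig O pi n m A _ _ _ _ pi0 mn htr hdet hexact.
have htr' : A 0 0 + A 1 1 = beta + alpha + (- c1) * pi ^+ n by rewrite htr; ring.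
have hdet' : A 0 0 * A 1 1 - A 0 1 * A 1 0 = beta * alpha + c0 * pi ^+ n by rewrite hdet; ring.
have hnd' : ~ dvdO (pi ^+ m.+1) (beta - alpha).
  move=> [c hc]; apply: hexact; exists (- c); rewrite mulNr -hc; ring.
have [e2 [ne2 he2]] := @eig O pi n m A _ _ _ _ pi0 mn htr' hdet' hnd'.
by exists e1, e2.
Qed.
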